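(* Let $\mathcal{M}$ be an unbounded graph matroid family and let $G$ be an $\mathcal{M}$-reconstructible graph with at least two edges. Then $\mathcal{M}(G)$ is bridgeless (i.e., has no coloops).
   Context: All graphs are finite and simple and have no isolated vertices. A graph matroid family $\mathcal{M}$ assigns to every graph $G$ a matroid $\mathcal{M}(G)$ on $E(G)$ such that (i) every graph isomorphism $V(G)\to V(H)$ induces an isomorphism $\mathcal{M}(G)\to\mathcal{M}(H)$, and (ii) for every subgraph $H$ of $G$, $\mathcal{M}(H)$ is the restriction of $\mathcal{M}(G)$ to $E(H)$. $\mathcal{M}$ is unbounded if the rank of $\mathcal{M}(K_n)$ is unbounded in $n$. $G$ is $\mathcal{M}$-reconstructible if for every graph $H$ and every matroid isomorphism $\psi:E(G)\to E(H)$ between $\mathcal{M}(G)$ and $\mathcal{M}(H)$ there is a graph isomorphism $\varphi:V(G)\to V(H)$ with $\psi(uv)=\varphi(u)\varphi(v)$ for all $uv\in E(G)$. A bridge of a matroid is an element contained in no circuit. *)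

(* Defs.v *)
From mathcomp Require Import all_boot.
From mathcomp Require Import finmap.
Set Implicit Arguments. Unset Strict Implicit. Unset Printing Implicit Defensive.
Local Open Scope fset_scope.

(* An edge {u,v} (u <> v) is stored
   canonically as the ordered pair (u,v) with u < v.  A graph is a finite set of
   such edges; its vertex set is the set of endpoints, so graphs are finite,
   simple and have no isolated vertices by construction. *)
Definition edge := (nat * nat)%type.

Definition mkedge (u v : nat) : edge := (minn u v, maxn u v).

Record graph := Graph {
  gE : {fset edge};
  gE_wf : all (fun e : edge => e.1 < e.2) gE
}.

Definition gV (G : graph) : {fset nat} :=
  [fset e.1 | e in gE G] `|` [fset e.2 | e in gE G].

Definition subgraph (H G : graph) : Prop := gE H `<=` gE G.

Definition K_edges (n : nat) : {fset edge} :=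
  [fset e in ([seq (i, j) | i <- iota 0 n, j <- iota 0 n] : seq edge) | e.1 < e.2].

Lemma K_wf (n : nat) : all (fun e : edge => e.1 < e.2) (K_edges n).
Proof. by apply/allP => e; rewrite /K_edges !inE => /andP[]. Qed.

Definition K (n : nat) : graph := Graph (K_wf n).

Definition graph_iso (G H : graph) (phi : nat -> nat) : Prop :=
  [/\ {in gV G &, injective phi},
      [fset phi v | v in gV G] = gV H &
      {in gV G &, forall u v,
          (mkedge u v \in gE G) = (mkedge (phi u) (phi v) \in gE H)}].

Definition is_matroid (T : choiceType) (E : {fset T}) (indep : {fset T} -> bool)
  : Prop :=
  [/\ forall I, indep I -> I `<=` E,
      indep fset0,
      forall I J, indep J -> I `<=` J -> indep I &
      forall I J, indep I -> indep J -> #|` I| < #|` J| ->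
        exists2 x, x \in J `\` I & indep (x |` I)].

Definition mrank (T : choiceType) (E : {fset T}) (indep : {fset T} -> bool) : nat :=
  \max_(F <- fpowerset E | indep F) #|` F|.

Definition circuit (T : choiceType) (E : {fset T}) (indep : {fset T} -> bool)
  (C : {fset T}) : Prop :=
  [/\ C `<=` E, ~~ indep C & forall D, D `<` C -> indep D].

Definition bridge (T : choiceType) (E : {fset T}) (indep : {fset T} -> bool)
  (e : T) : Prop :=
  e \in E /\ forall C, circuit E indep C -> e \notin C.

Definition bridgeless (T : choiceType) (E : {fset T}) (indep : {fset T} -> bool)
  : Prop := forall e, ~ bridge E indep e.

Definition matroid_iso (T : choiceType) (E1 : {fset T}) (indep1 : {fset T} -> bool)
  (E2 : {fset T}) (indep2 : {fset T} -> bool) (psi : T -> T) : Prop :=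
  [/\ {in E1 &, injective psi},
      [fset psi e | e in E1] = E2 &
      forall F, F `<=` E1 -> indep1 F = indep2 [fset psi e | e in F]].

(* ---------- Graph matroid families --------------------------------------
   A family is given by its independence predicates: M G is the independence
   predicate of the matroid M(G) on E(G). *)
Definition edge_map (phi : nat -> nat) (e : edge) : edge := mkedge (phi e.1) (phi e.2).

Definition graph_matroid_family (M : graph -> {fset edge} -> bool) : Prop :=
  [/\ forall G, is_matroid (gE G) (M G),
      forall G H phi, graph_iso G H phi ->
        matroid_iso (gE G) (M G) (gE H) (M H) (edge_map phi) &
      forall G H, subgraph H G ->
        forall F, M H F = (F `<=` gE H) && M G F].

Definition unbounded_family (M : graph -> {fset edge} -> bool) : Prop :=
  forall k, exists n, k <= mrank (gE (K n)) (M (K n)).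

Definition reconstructible (M : graph -> {fset edge} -> bool) (G : graph) : Prop :=
  forall (H : graph) (psi : edge -> edge),
    matroid_iso (gE G) (M G) (gE H) (M H) psi ->
    exists phi : nat -> nat,
      graph_iso G H phi /\ {in gE G, forall e, psi e = edge_map phi e}.

(* Main.v *)
Require Import Defs.
From mathcomp Require Import all_boot.
From mathcomp Require Import finmap.
From mathcomp Require Import zify.
From Stdlib Require Import Classical.
Local Open Scope fset_scope.

Set Implicit Arguments. Unset Strict Implicit. Unset Printing Implicit Defensive.


Lemma mkedgeC u v : mkedge u v = mkedge v u.
Proof. by rewrite /mkedge minnC maxnC. Qed.

Lemma mkedge_id (e : edge) : e.1 < e.2 -> mkedge e.1 e.2 = e.
Proof. by case: e => a b /= h; rewrite /mkedge; congr pair; lia. Qed.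

Lemma mkedge_lt u v : u != v -> (mkedge u v).1 < (mkedge u v).2.
Proof. rewrite /mkedge /=; lia. Qed.

Lemma mkedge_eq a b c d : mkedge a b = mkedge c d ->
  (a = c /\ b = d) \/ (a = d /\ b = c).
Proof. rewrite /mkedge => -[]; lia. Qed.

Lemma mkedge_ends a b w :
  (w == (mkedge a b).1) || (w == (mkedge a b).2) = (w == a) || (w == b).
Proof. rewrite /mkedge; cbn [fst snd]; case: (leqP a b) => h //.
by rewrite orbC.
Qed.

Lemma edge_map_mkedge phi u v : edge_map phi (mkedge u v) = mkedge (phi u) (phi v).
Proof. rewrite /edge_map /mkedge; cbn [fst snd]; case: (leqP u v) => h //.
by rewrite minnC maxnC.
Qed.

Definition VS (S : {fset edge}) : {fset nat} :=
  [fset e.1 | e in S] `|` [fset e.2 | e in S].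

Lemma inVS v S : reflect (exists2 e, e \in S & (v == e.1) || (v == e.2)) (v \in VS S).
Proof.
rewrite /VS in_fsetU; apply: (iffP orP).
  by case=> /imfsetP [e /= eS ->]; exists e => //; rewrite eqxx ?orbT.
case=> e eS /orP [] /eqP ->; [left|right]; apply/imfsetP; by exists e.
Qed.

Lemma VSU1 a S : VS (a |` S) = a.1 |` (a.2 |` VS S).
Proof.
apply/fsetP => v; apply/inVS/idP; rewrite in_fsetU in_fset1 in_fsetU in_fset1.
  case=> e; rewrite in_fsetU in_fset1 => /orP [/eqP -> | eS] h.
    by case/orP: h => ->; rewrite ?orbT.
  by apply/orP; right; apply/orP; right; apply/inVS; exists e.
case/orP => [h|/orP [h | /inVS [e eS h]]].
- by exists a; rewrite ?in_fsetU ?in_fset1 ?eqxx ?h.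
- by exists a; rewrite ?in_fsetU ?in_fset1 ?eqxx ?h ?orbT.
- by exists e; rewrite ?in_fsetU ?eS ?orbT.
Qed.

Lemma VS_sub A B : A `<=` B -> VS A `<=` VS B.
Proof. move=> /fsubsetP sub; apply/fsubsetP => v /inVS [e /sub eB h]; apply/inVS; by exists e. Qed.


Definition validpart (S : {fset edge}) : {fset edge} := [fset e in S | e.1 < e.2].
Lemma validpart_wf S : all (fun e : edge => e.1 < e.2) (validpart S).
Proof. by apply/allP => e; rewrite !inE => /andP[]. Qed.
Definition gS S := Graph (validpart_wf S).
Definition ind (M : graph -> {fset edge} -> bool) S := M (gS S) S.
Definition validS (S : {fset edge}) := {in S, forall e : edge, e.1 < e.2}.

Lemma validpartE S : validS S -> validpart S = S.
Proof. move=> v; apply/fsetP => e; rewrite !inE; case eS: (e \in S) => //=; exact: v. Qed.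

Lemma gE_valid G : validS (gE G).
Proof. move=> e eG; exact: (allP (gE_wf G) e eG). Qed.

Lemma gES S : validS S -> gE (gS S) = S.
Proof. exact: validpartE. Qed.

Lemma valid_sub A B : validS B -> A `<=` B -> validS A.
Proof. by move=> vB /fsubsetP s e /s; apply: vB. Qed.

Lemma M_ind M G S : graph_matroid_family M -> M G S = (S `<=` gE G) && ind M S.
Proof.
case=> Mat _ Res.
case sub: (S `<=` gE G) => /=; last first.
  case: (Mat G) => h _ _ _; apply/negP => /h; by rewrite sub.
have vS : validS S.
  have := @valid_sub S (gE G) (@gE_valid G). rewrite sub. by apply.
have sg : subgraph (gS S) G by rewrite /subgraph gES.
by rewrite /ind (Res G (gS S) sg S) gES // fsubset_refl.
Qed.

Lemma ind_valid M S : graph_matroid_family M -> ind M S -> validS S.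
Proof.
move=> hM; case: (hM) => Mat _ _; rewrite /ind => h.
case: (Mat (gS S)) => hs _ _ _; have := hs _ h => sub.
by apply: valid_sub sub; apply: gE_valid.
Qed.

Lemma ind_sub M I J : graph_matroid_family M -> ind M J -> I `<=` J -> ind M I.
Proof.
move=> hM hJ sub; have vJ := ind_valid hM hJ.
case: (hM) => Mat _ _; case: (Mat (gS J)) => _ _ her _.
have := her I J hJ sub; rewrite (M_ind _ _ hM) => /andP[]//.
Qed.

Lemma ind0 M : graph_matroid_family M -> ind M fset0.
Proof.
move=> hM; case: (hM) => Mat _ _; case: (Mat (gS fset0)) => _ h _ _.
by move: h; rewrite (M_ind _ _ hM) => /andP[].
Qed.

Lemma ind_aug M I J : graph_matroid_family M -> ind M I -> ind M J ->
  #|` I| < #|` J| -> exists2 x, x \in J `\` I & ind M (x |` I).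
Proof.
move=> hM hI hJ lt; have vI := ind_valid hM hI; have vJ := ind_valid hM hJ.
have vU : validS (I `|` J) by move=> e; rewrite in_fsetU => /orP [/vI|/vJ].
case: (hM) => Mat _ _; case: (Mat (gS (I `|` J))) => _ _ _ aug.
have MI : M (gS (I `|` J)) I by rewrite (M_ind _ _ hM) gES // fsubsetUl hI.
have MJ : M (gS (I `|` J)) J by rewrite (M_ind _ _ hM) gES // fsubsetUr hJ.
case: (aug I J MI MJ lt) => x xJI; rewrite (M_ind _ _ hM) => /andP[_ h].
by exists x.
Qed.


Definition cl M I (g : edge) := (g \in I) || ~~ ind M (g |` I).

Lemma strong_aug M : graph_matroid_family M -> forall n T J,
  #|` J| - #|` T| = n -> ind M T -> ind M J -> #|` T| <= #|` J| ->
  exists T', [/\ T `<=` T', T' `<=` T `|` J, ind M T' & #|` T'| = #|` J|].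
Proof.
move=> hM; elim=> [|n IH] T J hn hT hJ hle.
  exists T; split => //; [exact: fsubsetUl| lia].
have lt : #|` T| < #|` J| by lia.
case: (ind_aug hM hT hJ lt) => x; rewrite in_fsetD => /andP [xT xJ] hx.
have cx : #|` x |` T| = #|` T|.+1 by rewrite cardfsU1 xT.
case: (IH (x |` T) J _ hx hJ _) => [||T' [s1 s2 s3 s4]]; try lia.
exists T'; split => //.
  by apply: fsubset_trans s1; apply: fsubsetU1.
apply/fsubsetP => e /(fsubsetP s2); rewrite !in_fsetU in_fset1.
by case/orP => [/orP [/eqP->|->]|->]; rewrite ?xJ ?orbT.
Qed.

Lemma le_cl M I J : graph_matroid_family M -> ind M I -> ind M J ->
  {in J, forall j, cl M I j} -> #|` J| <= #|` I|.
Proof.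
move=> hM hI hJ hc; rewrite leqNgt; apply/negP => lt.
case: (ind_aug hM hI hJ lt) => x; rewrite in_fsetD => /andP [xI xJ] hx.
by move: (hc x xJ); rewrite /cl (negbTE xI) hx.
Qed.

Lemma CL M I T g : graph_matroid_family M -> ind M I -> ind M T ->
  {in T, forall t, cl M I t} -> ~~ ind M (g |` T) -> cl M I g.
Proof.
move=> hM hI hT hc hg; rewrite /cl; case gI: (g \in I) => //=.
apply/negP => hgI.
have leTI := le_cl hM hI hT hc.
have cg : #|` g |` I| = #|` I|.+1 by rewrite cardfsU1 gI.
case: (strong_aug hM (erefl _) hT hgI _) => [|T' [s1 s2 s3 s4]]; first lia.
case gT': (g \in T').
  move: hg; rewrite (ind_sub hM s3) //; apply/fsubsetP => e.
  by rewrite in_fset1U => /orP [/eqP->|/(fsubsetP s1)].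
have : #|` T'| <= #|` I|.
  apply: (le_cl hM hI s3) => t tT'.
  move: (fsubsetP s2 t tT'); rewrite !in_fsetU in_fset1.
  case/orP => [/hc //| /orP [/eqP tg|tI]]; first by move: tT'; rewrite tg gT'.
  by rewrite /cl tI.
lia.
Qed.

Lemma basis_ex M A : graph_matroid_family M ->
  exists I, [/\ I `<=` A, ind M I & {in A, forall a, cl M I a}].
Proof.
move=> hM.
suff : forall n I, #|` A| - #|` I| <= n -> I `<=` A -> ind M I ->
  exists I, [/\ I `<=` A, ind M I & {in A, forall a, cl M I a}].
  move=> /(_ #|` A| fset0); apply; [rewrite cardfs0; lia | exact: fsub0set | exact: ind0].
elim=> [|n IH] I hn sub hI.
  exists I; split => // a aA; rewrite /cl.
  case aI: (a \in I) => //=; apply/negP => h.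
  have : #|` a |` I| <= #|` A|.
    by apply: fsubset_leq_card; apply/fsubsetP => e; rewrite in_fset1U => /orP [/eqP->|/(fsubsetP sub)].
  rewrite cardfsU1 aI; lia.
case: (boolP (all (cl M I) A)) => [/allP h|].
  by exists I; split.
case/allPn => a aA; rewrite /cl negb_or negbK => /andP [aI ha].
apply: (IH (a |` I)) => //.
- rewrite cardfsU1 aI. have : #|` I| < #|` A|.
    have : #|` a |` I| <= #|` A|.
      by apply: fsubset_leq_card; apply/fsubsetP => e; rewrite in_fset1U => /orP [/eqP->|/(fsubsetP sub)].
    rewrite cardfsU1 aI; lia.
  lia.
- by apply/fsubsetP => e; rewrite in_fset1U => /orP [/eqP->|/(fsubsetP sub)].
Qed.


Lemma gVE G : gV G = VS (gE G). Proof. by []. Qed.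

Lemma inVS1 e S : e \in S -> e.1 \in VS S.
Proof. by move=> eS; apply/inVS; exists e; rewrite ?eqxx. Qed.
Lemma inVS2 e S : e \in S -> e.2 \in VS S.
Proof. by move=> eS; apply/inVS; exists e; rewrite ?eqxx ?orbT. Qed.

Lemma ind_iso M S phi : graph_matroid_family M -> validS S ->
  {in VS S &, injective phi} -> ind M S = ind M [fset edge_map phi e | e in S].
Proof.
move=> hM vS inj.
set S' := [fset edge_map phi e | e in S].
have vS' : validS S'.
  move=> e' /imfsetP [e eS ->]; rewrite /edge_map; apply: mkedge_lt.
  apply/negP => /eqP /inj; move=> /(_ (inVS1 eS) (inVS2 eS)) h.
  by have := vS e eS; rewrite h ltnn.
have giso : graph_iso (gS S) (gS S') phi.
  rewrite /graph_iso !gVE !gES //; split => //.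
  - apply/fsetP => w; apply/imfsetP/inVS.
      case=> v /= /inVS [e eS hv] ->; exists (edge_map phi e).
        by apply: in_imfset.
      rewrite /edge_map mkedge_ends.
      by case/orP: hv => /eqP ->; rewrite eqxx ?orbT.
    case=> e' /imfsetP [e eS ->]; rewrite /edge_map mkedge_ends.
    by case/orP => /eqP ->; [exists e.1 | exists e.2]; rewrite //= ?(inVS1 eS) ?(inVS2 eS).
  - move=> u v uV vV; apply/idP/idP.
      by move=> h; rewrite -edge_map_mkedge; apply: in_imfset.
    case/imfsetP => e /= eS; rewrite /edge_map => /mkedge_eq.
    have h1 := inVS1 eS; have h2 := inVS2 eS.
    case=> [[/inj ea /inj eb]|[/inj ea /inj eb]].
      by rewrite ea // eb // mkedge_id ?eS //; apply: vS.
    by rewrite mkedgeC ea // eb // mkedge_id ?eS //; apply: vS.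
case: (hM) => _ Iso _; case: (Iso _ _ _ giso) => _ _ h.
have := h S; rewrite gES // => /(_ (fsubset_refl _)).
by rewrite /ind.
Qed.


Definition star (w : nat) (L : {fset nat}) : {fset edge} := [fset mkedge w l | l in L].

Lemma star_valid w L : w \notin L -> validS (star w L).
Proof.
move=> wL e /imfsetP [l /= lL ->]; apply: mkedge_lt.
by apply/negP => /eqP wl; move: wL; rewrite wl lL.
Qed.

Lemma card_star w L : w \notin L -> #|` star w L| = #|` L|.
Proof.
move=> wL; rewrite /star card_in_imfset //.
move=> a b aL bL /mkedge_eq [[_ ->]//|[wb aw]].
by move: wL; rewrite -aw aL.
Qed.

Lemma starU1 w x L : star w (x |` L) = mkedge w x |` star w L.
Proof. by rewrite /star imfsetU1. Qed.

Lemma VS_star w L : VS (star w L) `<=` w |` L.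
Proof.
apply/fsubsetP => v /inVS [e /imfsetP [l /= lL ->]].
rewrite mkedge_ends in_fset1U => /orP [->//|/eqP ->]; by rewrite lL orbT.
Qed.

Lemma mem_enum_fset (L : {fset nat}) x : (x \in enum_fset L) = (x \in L).
Proof. by []. Qed.

Lemma star_iso M w L w' L' : graph_matroid_family M ->
  w \notin L -> w' \notin L' -> #|` L| = #|` L'| ->
  ind M (star w L) = ind M (star w' L').
Proof.
move=> hM wL wL' cL.
pose ls := enum_fset L; pose ls' := enum_fset L'.
pose phi v := if v == w then w' else nth w' ls' (index v ls).
have phiL l : l \in L -> phi l \in L' /\ phi l != w'.
  move=> lL; have lw : l != w by apply/negP => /eqP e; move: wL; rewrite -e lL.
  have hi : index l ls < size ls' by rewrite -cL index_mem.
  rewrite /phi (negbTE lw); split; first by rewrite -mem_enum_fset mem_nth.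
  by apply/negP => /eqP e; move: wL'; rewrite -e -mem_enum_fset mem_nth.
have inj : {in VS (star w L) &, injective phi}.
  move=> a b /(fsubsetP (VS_star w L)) aV /(fsubsetP (VS_star w L)) bV.
  move: aV bV; rewrite !in_fset1U.
  case/orP => [/eqP->|aL]; case/orP => [/eqP->|bL] //.
  - move=> h; have [_] := phiL b bL; rewrite -h /phi eqxx; by case/negP.
  - move=> h; have [_] := phiL a aL; rewrite h /phi eqxx; by case/negP.
  have aw : a != w by apply/negP => /eqP e; move: wL; rewrite -e aL.
  have bw : b != w by apply/negP => /eqP e; move: wL; rewrite -e bL.
  rewrite /phi (negbTE aw) (negbTE bw) => /eqP.
  rewrite nth_uniq ?fset_uniq // -?cL ?index_mem // => /eqP h.
  by rewrite -(nth_index 0 aL) -(nth_index 0 bL) h.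
rewrite (ind_iso hM (star_valid wL) inj); congr (ind M _).
apply/fsetP => e; apply/imfsetP/imfsetP => /=.
  case=> e0 /imfsetP [l /= lL ->] ->; rewrite edge_map_mkedge.
  have [h1 _] := phiL l lL.
  exists (phi l) => //; rewrite /phi eqxx //.
case=> l' l'L' ->.
have hi : index l' ls' < size ls by rewrite cL index_mem.
pose l := nth 0 ls (index l' ls').
have lL : l \in L by rewrite -mem_enum_fset mem_nth.
exists (mkedge w l); first by apply: in_imfset.
rewrite edge_map_mkedge /phi eqxx.
have lw : l != w by apply/negP => /eqP ee; move: wL; rewrite -ee lL.
rewrite (negbTE lw) index_uniq ?fset_uniq // nth_index //.
Qed.


Lemma mrank_ex (E : {fset edge}) P k : 0 < k -> k <= mrank E P ->
  exists F, [/\ F `<=` E, P F & k <= #|` F|].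
Proof.
move=> k0; rewrite /mrank.
case: (boolP (has (fun F => P F && (k <= #|` F|)) (fpowerset E))).
  by case/hasP => F; rewrite fpowersetE => FE /andP [PF kF] _; exists F.
move/hasPn => h hk; exfalso.
have : \max_(F <- fpowerset E | P F) #|` F| <= k.-1.
  apply/bigmax_leqP_seq => F FE PF; have := h F FE; rewrite PF /=; lia.
lia.
Qed.

Lemma card_iota_fset m n : #|` seq_fset tt (iota m n)| = n.
Proof. by rewrite size_seq_fset undup_id ?iota_uniq // size_iota. Qed.

Lemma in_iota_fset m n x : (x \in seq_fset tt (iota m n)) = (m <= x < m + n).
Proof. by rewrite seq_fsetE mem_iota. Qed.

Lemma stars_ind M : graph_matroid_family M -> unbounded_family M ->
  forall k w L, w \notin L -> #|` L| = k -> ind M (star w L).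
Proof.
move=> hM hU; elim=> [|k IH] w L wL cL.
  have : #|` star w L| == 0 by rewrite card_star // cL.
  by rewrite cardfs_eq0 => /eqP ->; apply: ind0.
apply/negPn/negP => hdep.
have dep w' L' : w' \notin L' -> #|` L'| = k.+1 -> ~~ ind M (star w' L').
  by move=> h1 h2; rewrite -(star_iso hM wL h1) ?cL ?h2 // hdep.
pose W := seq_fset tt (iota 0 k); pose LL := seq_fset tt (iota k k).
have cW : #|` W| = k by apply: card_iota_fset.
have cLL : #|` LL| = k by apply: card_iota_fset.
pose S := [fset mkedge a b | a in W, b in LL].
have [I [IS hI hc]] := basis_ex S hM.
have WLL a : a \in W -> a \notin LL.
  by rewrite !in_iota_fset; lia.
have starS a : a \in W -> {in star a LL, forall t, cl M I t}.
  move=> aW t /imfsetP [l /= lL ->]; apply: hc; by apply: in_imfset2.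
have claim1 a x : a \in W -> x != a -> cl M I (mkedge a x).
  move=> aW xa; case xLL: (x \in LL).
    by apply: hc; apply: in_imfset2.
  apply: (CL hM hI (IH _ _ (WLL a aW) cLL) (starS a aW)).
  rewrite -starU1; apply: dep; first by rewrite in_fset1U negb_or eq_sym xa WLL.
  by rewrite cardfsU1 xLL cLL.
have claim2 g : g.1 < g.2 -> cl M I g.
  move=> lt.
  case g1W: (g.1 \in W).
    rewrite -(mkedge_id lt); apply: claim1 => //; rewrite neq_ltn lt orbT //.
  case g2W: (g.2 \in W).
    rewrite -(mkedge_id lt) mkedgeC; apply: claim1 => //; rewrite neq_ltn lt //.
  have g1W' : g.1 \notin W by rewrite g1W.
  apply: (CL hM hI (IH _ _ g1W' cW)).
    move=> t /imfsetP [a /= aW ->]; rewrite mkedgeC; apply: claim1 => //.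
    by apply/negP => /eqP e; move: g1W; rewrite e aW.
  rewrite -{1}(mkedge_id lt) -starU1; apply: dep.
    by rewrite in_fset1U negb_or g1W' andbT neq_ltn lt.
  by rewrite cardfsU1 g2W cW.
case: (hU (#|` S|.+1)) => n hn.
case: (mrank_ex _ hn) => // J [JK MJ cJ].
have hJ : ind M J by move: MJ; rewrite (M_ind _ _ hM) => /andP[].
have vJ := ind_valid hM hJ.
have := le_cl hM hI hJ (fun j jJ => claim2 j (vJ j jJ)).
have := fsubset_leq_card IS; lia.
Qed.


Lemma swap_inj (y z : nat) :
  injective (fun v => if v == y then z else if v == z then y else v).
Proof.
move=> a b /=; do ! (case: ifP => /eqP ?); lia.
Qed.

Lemma ext M F (x y : nat) : graph_matroid_family M -> unbounded_family M ->
  ind M F -> y \notin VS F -> x != y -> ind M (mkedge x y |` F).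
Proof.
move=> hM hU hF yF xy; apply/negPn/negP => hd.
have vF := ind_valid hM hF.
pose m := ((\max_(v <- VS F) v) + x + 1)%N.
have mV v : v \in VS F -> v < m.
  move=> vV; have h : v <= \max_(v <- VS F) v by apply: leq_bigmax_seq.
  rewrite /m; lia.
pose Z := seq_fset tt (iota m #|` F|.+1).
have claim z : z \in Z -> ~~ ind M (mkedge x z |` F).
  rewrite in_iota_fset => /andP [mz _].
  pose phi v := if v == y then z else if v == z then y else v.
  have vxyF : validS (mkedge x y |` F).
    move=> e; rewrite in_fset1U => /orP [/eqP ->|/vF //]; exact: mkedge_lt.
  have inj : {in VS (mkedge x y |` F) &, injective phi}.
    by move=> a b _ _; apply: swap_inj.
  suff <- : [fset edge_map phi e | e in mkedge x y |` F] = mkedge x z |` F.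
    by rewrite -(ind_iso hM vxyF inj).
  rewrite imfsetU1 edge_map_mkedge.
  have -> : phi x = x.
    rewrite /phi (negbTE xy); case: (x =P z) => // e; move: mz; rewrite /m; lia.
  have -> : phi y = z by rewrite /phi eqxx.
  have -> : [fset edge_map phi e | e in F] = F.
    rewrite -[RHS]imfset_id; apply: eq_in_imfset => e eF /=.
    have fix1 v : v \in VS F -> phi v = v.
      move=> vV; rewrite /phi; case: (v =P y) => [e1|_].
        by move: yF; rewrite -e1 vV.
      case: (v =P z) => // e2; have := mV v vV; lia.
    by rewrite /edge_map fix1 ?(inVS1 eF) // fix1 ?(inVS2 eF) // mkedge_id //; apply: vF.
  by [].
have xZ : x \notin Z by rewrite in_iota_fset /m; lia.
have hs : ind M (star x Z) by apply: (stars_ind hM hU xZ); apply: card_iota_fset.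
case: (ind_aug hM hF hs _) => [|t].
  by rewrite card_star // card_iota_fset.
rewrite in_fsetD => /andP [_ /imfsetP [z /= zZ ->]].
by move/negP: (claim z zZ).
Qed.


Lemma min_dep M G : forall n C, #|` C| <= n -> C `<=` gE G -> ~~ M G C ->
  exists C', C' `<=` C /\ circuit (gE G) (M G) C'.
Proof.
elim=> [|n IH] C hn hCE hC.
  case: (classic (forall D, D `<` C -> M G D)) => [h|h].
    exists C. split. exact: fsubset_refl. by split.
  case: (not_all_ex_not _ _ h) => D hD.
  case: (imply_to_and _ _ hD) => DC MD.
  have := fproper_ltn_card DC; lia.
case: (classic (forall D, D `<` C -> M G D)) => [h|h].
  exists C. split. exact: fsubset_refl. by split.
case: (not_all_ex_not _ _ h) => D hD.
case: (imply_to_and _ _ hD) => DC /negP MD.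
have lt := fproper_ltn_card DC.
have DE : D `<=` gE G by apply: fsubset_trans hCE; apply: fproper_sub.
case: (IH D _ DE MD) => [|C' [C'D hC']]; first lia.
exists C'; split => //; apply: fsubset_trans C'D _; exact: fproper_sub.
Qed.

Lemma bridge_coloop M G e F : graph_matroid_family M ->
  bridge (gE G) (M G) e -> F `<=` gE G -> ind M (F `\ e) -> ind M F.
Proof.
move=> hM [eE hbr] FE hFe; apply/negPn/negP => hF.
have MF : ~~ M G F by rewrite (M_ind _ _ hM) FE.
case: (min_dep (leqnn _) FE MF) => C [CF hC].
have eC := hbr C hC.
case: hC => CE nC _.
have : ind M C by apply: (ind_sub hM hFe); rewrite fsubsetD1 CF eC.
by move: nC; rewrite (M_ind _ _ hM) CE /= => /negbTE ->.
Qed.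


Lemma card2 (a b : nat) (A : {fset nat}) : a != b ->
  #|` a |` (b |` A)| = ((a \notin A) + (b \notin A) + #|` A|)%N.
Proof. by move=> ab; rewrite !cardfsU1 in_fset1U negb_or ab /= addnA. Qed.

Lemma core M G e (x y : nat) : graph_matroid_family M -> unbounded_family M ->
  reconstructible M G -> bridge (gE G) (M G) e -> x != y ->
  y \notin VS (gE G) ->
  ((e.1 \notin VS (gE G `\ e)) + (e.2 \notin VS (gE G `\ e)) !=
   (x \notin VS (gE G `\ e)) + 1)%N -> False.
Proof.
move=> hM hU hR hbr xy yE hcard.
have eE : e \in gE G by case: hbr.
set E := gE G in eE yE hbr hcard *.
set X := E `\ e in hcard *.
have vE : validS E := @gE_valid G.
have XE : X `<=` E by apply: fsubsetDl.
have vX : validS X := valid_sub vE XE.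
set f := mkedge x y.
have vf : f.1 < f.2 by apply: mkedge_lt.
have fE : f \notin E.
  apply/negP => fE; move/negP: yE; apply; apply/inVS; exists f => //.
  by rewrite /f mkedge_ends eqxx orbT.
have vfX : validS (f |` X) by move=> g; rewrite in_fset1U => /orP [/eqP ->|/vX].
pose H := gS (f |` X).
have HE : gE H = f |` X by apply: gES.
pose psi g := if g == e then f else g.
have Eimg : [fset psi g | g in E] = f |` X.
  apply/fsetP => g; apply/imfsetP/idP.
    case=> a aE ->; rewrite /psi; case: (a =P e) => [_|ae].
      by rewrite in_fset1U eqxx.
    by rewrite in_fset1U in_fsetD1 aE andbT orbC; apply/orP; left; apply/eqP.
  rewrite in_fset1U => /orP [/eqP ->|].
    by exists e => //; rewrite /psi eqxx.
  rewrite in_fsetD1 => /andP [ge gE]; exists g => //.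
  by rewrite /psi (negbTE ge).
have miso : matroid_iso E (M G) (gE H) (M H) psi.
  rewrite HE; split => //.
  - move=> a b aE bE; rewrite /psi.
    case: (a =P e) => [ae|ae]; case: (b =P e) => [be|be] //.
    + by rewrite ae be.
    + by move=> fb; move: fE; rewrite fb bE.
    + by move=> af; move: fE; rewrite -af aE.
  - move=> F FE.
    have imgH : [fset psi g | g in F] `<=` gE H.
      rewrite HE -Eimg; apply/fsubsetP => g /imfsetP [a aF ->].
      by apply: in_imfset; apply: (fsubsetP FE).
    rewrite (M_ind _ _ hM) FE /= (M_ind _ _ hM) imgH /=.
    case eF: (e \in F).
      have -> : [fset psi g | g in F] = f |` (F `\ e).
        apply/fsetP => g; apply/imfsetP/idP.
          case=> a aF ->; rewrite /psi; case: (a =P e) => [_|ae].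
            by rewrite in_fset1U eqxx.
          by rewrite in_fset1U in_fsetD1 aF andbT orbC; apply/orP; left; apply/eqP.
        rewrite in_fset1U => /orP [/eqP ->|].
          by exists e => //; rewrite /psi eqxx.
        rewrite in_fsetD1 => /andP [ge gF]; exists g => //.
        by rewrite /psi (negbTE ge).
      have FeE : F `\ e `<=` E by apply: fsubset_trans FE; apply: fsubsetDl.
      apply/idP/idP => h.
        apply: (ext hM hU) => //.
          by apply: (ind_sub hM h); apply: fsubsetDl.
        by apply/negP => /(fsubsetP (VS_sub FeE)); apply/negP.
      apply: (bridge_coloop hM hbr FE).
      by apply: (ind_sub hM h); apply: fsubsetU1.
    have -> : [fset psi g | g in F] = F.
      rewrite -[RHS]imfset_id; apply: eq_in_imfset => g gF /=.
      rewrite /psi; case: (g =P e) => // ge; by move: eF; rewrite -ge gF.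
    by [].
case: (hR H psi miso) => phi [[inj img _] _].
have : #|` [fset phi v | v in gV G]| = #|` gV G| by rewrite card_in_imfset.
rewrite img !gVE HE.
have -> : gE G = e |` X by rewrite fsetD1K.
rewrite !VSU1 !card2; last 2 first.
- by rewrite neq_ltn vE // fset1U1.
- by rewrite neq_ltn vf.
have -> : ((f.1 \notin VS X) + (f.2 \notin VS X) = (x \notin VS X) + (y \notin VS X))%N.
  rewrite /f /mkedge /=; case: leqP => _ //; by rewrite addnC.
have yX : y \notin VS X by apply/negP => /(fsubsetP (VS_sub XE)); apply/negP.
rewrite yX; move: hcard.
case: (e.1 \notin VS X); case: (e.2 \notin VS X); case: (x \notin VS X) => /=; lia.
Qed.

Unset Implicit Arguments.


Theorem lemma3p1 (M : graph -> {fset edge} -> bool) (G : graph) :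
  graph_matroid_family M -> unbounded_family M ->
  reconstructible M G -> 2 <= #|` gE G| ->
  bridgeless (gE G) (M G).
Proof.
move=> hM hU hR h2 e hbr.
have eE : e \in gE G by case: hbr.
have cX := cardfsD1 e (gE G); rewrite eE in cX.
have [g gX] : exists g, g \in gE G `\ e.
  by apply/fset0Pn; rewrite -cardfs_eq0; lia.
pose c := (\max_(v <- VS (gE G)) v + 1)%N.
have cV v : v \in VS (gE G) -> v < c.
  move=> vV; have h : v <= \max_(v <- VS (gE G)) v by apply: leq_bigmax_seq.
  rewrite /c; lia.
have XE : VS (gE G `\ e) `<=` VS (gE G) by apply: VS_sub; apply: fsubsetDl.
have cE : c \notin VS (gE G) by apply/negP => /cV; lia.
have cX' : c \notin VS (gE G `\ e) by apply/negP => /(fsubsetP XE); apply/negP.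
case hb: ((e.1 \in VS (gE G `\ e)) (+) (e.2 \in VS (gE G `\ e))).
  apply: (core (x := c) (y := c.+1) hM hU hR hbr).
  - by rewrite neq_ltn ltnSn.
  - by apply/negP => /cV; lia.
  - rewrite cX'; move: hb.
    by case: (e.1 \in VS (gE G `\ e)); case: (e.2 \in VS (gE G `\ e)).
have uX : g.1 \in VS (gE G `\ e) by apply: inVS1.
apply: (core (x := g.1) (y := c) hM hU hR hbr).
- by apply/negP => /eqP h; move: (cV _ (fsubsetP XE _ uX)); rewrite h ltnn.
- exact: cE.
- rewrite uX; move: hb.
  by case: (e.1 \in VS (gE G `\ e)); case: (e.2 \in VS (gE G `\ e)).
Qed.
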